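(* Let $v_1,v_2,v_3$ be a basis of $\mathbb{Z}^3$ such that $\|v_i\|^2$ is odd for all $i$. Then at most one of the numbers $\|v_1\|^2,\|v_2\|^2,\|v_3\|^2$ is congruent to $3\bmod 4$.
   Context: $\|\cdot\|$ is the Euclidean norm on $\mathbb{R}^3$. *)

(* Defs.v *)
From mathcomp Require Import all_boot all_algebra.
Set Implicit Arguments. Unset Strict Implicit. Unset Printing Implicit Defensive.
Import GRing.Theory Num.Theory.
Local Open Scope ring_scope.

Definition sqnorm (v : 'rV[int]_3) : int := \sum_(j < 3) v ord0 j ^+ 2.

Definition is_Z3_basis (v : 'I_3 -> 'rV[int]_3) : Prop :=
  forall w : 'rV[int]_3,
    exists! c : 'I_3 -> int, w = \sum_(i < 3) c i *: v i.

(* Main.v *)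
Require Import Defs.
From mathcomp Require Import all_boot all_algebra.
From mathcomp Require Import zify ring.
Import GRing.Theory Num.Theory.
Local Open Scope ring_scope.

Lemma sqmod (a : int) : exists k, a ^+ 2 = 4 * k + (a %% 2)%Z /\ (0 <= a %% 2 < 2)%Z.
Proof.
have := divz_eq a 2. set q := (a %/ 2)%Z; set r := (a %% 2)%Z => ha.
have hr : (0 <= r < 2)%Z by rewrite /r modz_ge0 // ltz_pmod.
have : r = 0 \/ r = 1 by lia.
case=> hr'; [exists (q*q) | exists (q*q+q)]; split=> //; rewrite ha hr'; ring.
Qed.

Lemma L3 (a b c : int) : ((a^+2+b^+2+c^+2) == 3 %[mod 4])%Z ->
  (a %% 2 = 1)%Z /\ (b %% 2 = 1)%Z /\ (c %% 2 = 1)%Z.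
Proof. case: (sqmod a) => ka [-> ?]; case: (sqmod b) => kb [-> ?]; case: (sqmod c) => kc [-> ?].
move/eqP. lia. Qed.

Lemma allodd (w : 'rV[int]_3) : (sqnorm w == 3 %[mod 4])%Z ->
  forall k, (w ord0 k %% 2 = 1)%Z.
Proof.
rewrite /sqnorm !big_ord_recl big_ord0 addr0 addrA => /L3 [h0 [h1 h2]].
case=> [[|[|[|//]]] hk].
- by rewrite (_ : Ordinal hk = ord0) //; apply: val_inj.
- by rewrite (_ : Ordinal hk = lift ord0 ord0) //; apply: val_inj.
- by rewrite (_ : Ordinal hk = lift ord0 (lift ord0 ord0)) //; apply: val_inj.
Qed.

Lemma sum_delta (v : 'I_3 -> 'rV[int]_3) i :
  \sum_(k < 3) (k == i)%:R *: v k = v i.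
Proof.
rewrite (bigD1 i) //= eqxx scale1r big1 ?addr0 // => k /negbTE ->.
by rewrite scale0r.
Qed.

Theorem proposition4 (v : 'I_3 -> 'rV[int]_3) :
  is_Z3_basis v ->
  (forall i : 'I_3, ~~ (2 %| sqnorm (v i))%Z) ->
  (#|[pred i : 'I_3 | (sqnorm (v i) == 3 %[mod 4])%Z]| <= 1)%N.
Proof.
move=> hb _; rewrite leqNgt; apply/negP => /card_gt1P [i [j [Hi Hj Hij]]].
rewrite inE /= in Hi; rewrite inE /= in Hj.
have oi := @allodd _ Hi; have oj := @allodd _ Hj.
pose u : 'rV[int]_3 := \row_k ((v i ord0 k - v j ord0 k) %/ 2)%Z.
have hu : v i - v j = (2 : int) *: u.
  apply/rowP => k; rewrite !mxE.
  have := divz_eq (v i ord0 k) 2; have := divz_eq (v j ord0 k) 2.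
  have := divz_eq (v i ord0 k - v j ord0 k) 2.
  have := oi k; have := oj k.
  have : (0 <= (v i ord0 k - v j ord0 k) %% 2 < 2)%Z by rewrite modz_ge0 // ltz_pmod.
  move=> *; change (v i ord0 k - v j ord0 k = 2 * ((v i ord0 k - v j ord0 k) %/ 2)%Z); lia.
have [c [hc _]] := hb u.
have [d [_ hd]] := hb (v i - v j).
have e1 := hd (fun k => 2 * c k).
have e2 := hd (fun k => (k == i)%:R - (k == j)%:R).
have E : (fun k : 'I_3 => 2 * c k) = (fun k => (k == i)%:R - (k == j)%:R).
  rewrite -e1 ?e2 //.
  - by rewrite (eq_bigr (fun k => (k == i)%:R *: v k - (k == j)%:R *: v k)) ?sumrB ?sum_delta // => k _; rewrite scalerBl.
  - by rewrite hu hc scaler_sumr; apply: eq_bigr => k _; rewrite scalerA.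
have := congr1 (fun f => f i) E => /=.
rewrite eqxx (negbTE Hij) => h. lia.
Qed.
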